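(* Let $\rho$ be a density operator on a $d$-dimensional complex Hilbert space $\mathbb{H}$, and let $\{\ket{a_l}\}_{l=1}^d$ and $\{\ket{f_p}\}_{p=1}^d$ be two orthonormal bases of $\mathbb{H}$. Define the KD distribution $Q_{lp} = \langle f_p|a_l\rangle\langle a_l|\rho|f_p\rangle$ and the KD moments $q_n = \sum_{l,p} (Q_{lp})^n$ for positive integers $n$. Suppose the KD distribution is positive, i.e. $Q_{lp}$ is real and nonnegative for all $l,p$. Then for every positive integer $m$, the $(m+1)\times(m+1)$ Hankel matrix $H_m(\mathbf{q})$ with entries $[H_m(\mathbf{q})]_{ij} = q_{i+j+1}$ for $i,j\in\{0,1,\dots,m\}$ (built from $\mathbf{q} = (q_1,\dots,q_{2m+1})$) satisfies $\det[H_m(\mathbf{q})] \ge 0$.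
   Context: ''Positive'' means all entries of the KD distribution are real and nonnegative. *)

(* Defs.v *)
From HB Require Import structures.
From mathcomp Require Import all_boot all_order all_algebra.
Set Implicit Arguments. Unset Strict Implicit. Unset Printing Implicit Defensive.
Import Order.TTheory GRing.Theory Num.Theory.
Local Open Scope ring_scope.

(* The Hilbert space C^d: column vectors 'cV[C]_d over a numClosedFieldType C
   (e.g. the complex numbers), with the standard inner product. *)

Definition adj {C : numClosedFieldType} {m n} (M : 'M[C]_(m, n)) : 'M[C]_(n, m) :=
  map_mx Num.conj (M^T).

Definition braket {C : numClosedFieldType} {d} (u v : 'cV[C]_d) : C :=
  (adj u *m v) ord0 ord0.

Definition sandwich {C : numClosedFieldType} {d} (u : 'cV[C]_d) (M : 'M[C]_d)
  (v : 'cV[C]_d) : C := (adj u *m M *m v) ord0 ord0.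

Definition orthonormal_basis {C : numClosedFieldType} {d} (a : 'I_d -> 'cV[C]_d) :=
  forall i j : 'I_d, braket (a i) (a j) = (i == j)%:R.

Definition density_operator {C : numClosedFieldType} {d} (rho : 'M[C]_d) :=
  [/\ adj rho = rho,
      (forall v : 'cV[C]_d, 0 <= sandwich v rho v) &
      \tr rho = 1].

Definition KD {C : numClosedFieldType} {d} (rho : 'M[C]_d)
  (a f : 'I_d -> 'cV[C]_d) (l p : 'I_d) : C :=
  braket (f p) (a l) * sandwich (a l) rho (f p).

Definition KD_moment {C : numClosedFieldType} {d} (rho : 'M[C]_d)
  (a f : 'I_d -> 'cV[C]_d) (n : nat) : C :=
  \sum_(l < d) \sum_(p < d) (KD rho a f l p) ^+ n.

Definition KD_positive {C : numClosedFieldType} {d} (rho : 'M[C]_d)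
  (a f : 'I_d -> 'cV[C]_d) :=
  forall l p : 'I_d, KD rho a f l p \is Num.real /\ 0 <= KD rho a f l p.

Definition hankel {C : numClosedFieldType} (q : nat -> C) (m : nat) : 'M[C]_m.+1 :=
  \matrix_(i < m.+1, j < m.+1) q (i + j + 1)%N.

(* Main.v *)
Require Import Defs.
From mathcomp Require Import all_boot all_order all_fingroup all_algebra.
Set Implicit Arguments. Unset Strict Implicit. Unset Printing Implicit Defensive.
Import Order.TTheory GRing.Theory Num.Theory.
Local Open Scope ring_scope.

Section Hank.
Variable R : numDomainType.
Variables (T : finType) (x : T -> R).
Hypothesis x0 : forall t, 0 <= x t.
Variable n : nat.

Definition Vm (f : {ffun 'I_n -> T}) : 'M[R]_n := \matrix_(i, j) x (f i) ^+ j.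
Definition Pf (f : {ffun 'I_n -> T}) : R := \prod_i x (f i) ^+ i.+1.
Definition Hm : 'M[R]_n := \matrix_(i < n, j < n) \sum_t x t ^+ (i + j + 1).

Lemma detH_expand : \det Hm = \sum_f Pf f * \det (Vm f).
Proof.
rewrite /determinant.
have E : forall (s : 'S_n), (-1) ^+ s * \prod_i Hm i (s i) =
   \sum_(f : {ffun 'I_n -> T}) (-1) ^+ s * \prod_i x (f i) ^+ (i + s i + 1).
  move=> s; rewrite -big_distrr /=; congr (_ * _).
  rewrite -(bigA_distr_bigA (fun (i : 'I_n) (t : T) => x t ^+ (i + s i + 1))) /=.
  apply: eq_bigr => i _; rewrite mxE //.
under eq_bigr => s _ do rewrite E.
rewrite exchange_big /=; apply: eq_bigr => f _.
rewrite big_distrr /=; apply: eq_bigr => s _.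
rewrite mulrCA; congr (_ * _).
rewrite /Pf -big_split /=; apply: eq_bigr => i _.
by rewrite mxE -exprD addn1 addSn.
Qed.

Definition fperm (s : 'S_n) (f : {ffun 'I_n -> T}) : {ffun 'I_n -> T} := [ffun i => f (s i)].

Lemma fperm_inj s : injective (fperm s).
Proof.
move=> f g /ffunP E; apply/ffunP => i.
by have := E (s^-1 i)%g; rewrite !ffunE permKV.
Qed.

Lemma detV_perm s f : \det (Vm (fperm s f)) = (-1) ^+ s * \det (Vm f).
Proof.
have -> : Vm (fperm s f) = row_perm s (Vm f).
  by apply/matrixP => i j; rewrite !mxE ffunE.
by rewrite row_permE det_mulmx det_perm.
Qed.

Lemma detV_real f : \det (Vm f) \is Num.real.
Proof.
rewrite /determinant; apply: rpred_sum => s _; apply: rpredM.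
  by apply: rpredX; rewrite rpredN rpred1.
apply: rpred_prod => i _; rewrite mxE; apply: rpredX; exact: ger0_real.
Qed.

Lemma sym_sum f : \sum_(s : 'S_n) (-1) ^+ s * Pf (fperm s f)
   = (\prod_i x (f i)) * \det (Vm f).
Proof.
have -> : (\prod_i x (f i)) * \det (Vm f) = \det (\matrix_(i, j) x (f i) ^+ j.+1).
  have -> : (\matrix_(i, j) x (f i) ^+ j.+1) = diag_mx (\row_i x (f i)) *m Vm f.
    by apply/matrixP => i j; rewrite mul_diag_mx !mxE exprS.
  rewrite det_mulmx (det_trig (diag_mx_is_trig _)); congr (_ * _).
  by apply: eq_bigr => i _; rewrite !mxE eqxx mulr1n.
rewrite -det_tr /determinant; apply: eq_bigr => s _; congr (_ * _).
by rewrite /Pf; apply: eq_bigr => i _; rewrite !mxE ffunE.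
Qed.

Lemma detH_ge0 : 0 <= \det Hm.
Proof.
have pos : (0 : R) < (n`!)%:R by rewrite ltr0n fact_gt0.
rewrite -(pmulr_rge0 _ pos).
have -> : (n`!)%:R * \det Hm = \sum_(s : 'S_n) \det Hm.
  by rewrite sumr_const card_Sn mulr_natl.
have -> : \sum_(s : 'S_n) \det Hm =
   \sum_(s : 'S_n) \sum_f Pf (fperm s f) * ((-1) ^+ s * \det (Vm f)).
  apply: eq_bigr => s _; rewrite detH_expand (reindex_inj (@fperm_inj s)) /=.
  by apply: eq_bigr => f _; rewrite detV_perm.
rewrite exchange_big /=; apply: sumr_ge0 => f _.
have -> : \sum_(s : 'S_n) Pf (fperm s f) * ((-1) ^+ s * \det (Vm f))
   = (\sum_(s : 'S_n) (-1) ^+ s * Pf (fperm s f)) * \det (Vm f).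
  rewrite big_distrl /=; apply: eq_bigr => s _; by rewrite mulrCA mulrA.
rewrite sym_sum -mulrA; apply: mulr_ge0.
  by apply: prodr_ge0 => i _.
by rewrite -expr2 real_exprn_even_ge0 // detV_real.
Qed.
End Hank.

Theorem theorem2 (C : numClosedFieldType) (d : nat) (rho : 'M[C]_d)
    (a f : 'I_d -> 'cV[C]_d) :
  density_operator rho ->
  orthonormal_basis a -> orthonormal_basis f ->
  KD_positive rho a f ->
  forall m : nat, (0 < m)%N ->
  0 <= \det (hankel (KD_moment rho a f) m).
Proof.
move=> _ _ _ Hpos m _.
pose x := fun t : 'I_d * 'I_d => KD rho a f t.1 t.2.
have x0 : forall t, 0 <= x t by move=> t; case: (Hpos t.1 t.2).
have -> : hankel (KD_moment rho a f) m = Hm x m.+1.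
  apply/matrixP => i j; rewrite !mxE /KD_moment pair_bigA //.
exact: detH_ge0.
Qed.
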